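(* Let $d\ge2$. For $R>0$ and $r>0$, $$F_d(R,r)\ll(1+r)\,\kappa_d(R),$$ where $F_d(R,r)$ is the maximal number of points of $\mathbb{Z}^d$ in a spherical cap of size $r$ on the sphere $\{x\in\mathbb{R}^d:|x|=R\}$, and $\kappa_d(R)$ is the maximal number of points of $\mathbb{Z}^d$ in the intersection of this sphere with a hyperplane.
   Context: A spherical cap of size $r$ on the sphere of radius $R$ is the intersection of the sphere with a ball of radius $\approx r$ centered at a point of the sphere. The implied constant is absolute. *)

(* Defs.v *)
From mathcomp Require Import all_boot all_order all_algebra.
From mathcomp Require Import boolp classical_sets reals.
Set Implicit Arguments. Unset Strict Implicit. Unset Printing Implicit Defensive.
Import Order.TTheory GRing.Theory Num.Theory.
Local Open Scope ring_scope.
Local Open Scope classical_set_scope.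

Section Defs.
Variables (R : realType) (d : nat).

Definition sqnorm (x : 'rV[R]_d) : R := \sum_(i < d) (x ord0 i) ^+ 2.

Definition latticeb (x : 'rV[R]_d) : bool := [forall i, x ord0 i \is a Num.int].

Definition has_n_lattice_points (S : set 'rV[R]_d) (n : nat) : Prop :=
  exists s : seq 'rV[R]_d,
    [/\ uniq s, size s = n, all latticeb s & forall x, x \in s -> S x].

Definition sphere (Rad : R) : set 'rV[R]_d := [set x | sqnorm x = Rad ^+ 2].

(* spherical cap of size r centered at c (c on the sphere):
   sphere intersected with the closed ball of radius r around c *)
Definition cap (Rad r : R) (c : 'rV[R]_d) : set 'rV[R]_d :=
  sphere Rad `&` [set x | sqnorm (x - c) <= r ^+ 2].

Definition hyperplane (a : 'rV[R]_d) (b : R) : set 'rV[R]_d :=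
  [set x | \sum_(i < d) a ord0 i * x ord0 i = b].

Definition F_d (Rad r : R) : R :=
  sup [set (n%:R : R) | n in
        [set n | exists c, sphere Rad c /\ has_n_lattice_points (cap Rad r c) n]].

Definition kappa_d (Rad : R) : R :=
  sup [set (n%:R : R) | n in
        [set n | exists a b, a != 0 /\
                   has_n_lattice_points (sphere Rad `&` hyperplane a b) n]].

End Defs.

(* Main.v *)
Require Import Defs.
From mathcomp Require Import all_boot all_order all_algebra.
From mathcomp Require Import boolp classical_sets reals.
From mathcomp Require Import lra zify.
Set Implicit Arguments. Unset Strict Implicit.
Import Order.TTheory GRing.Theory Num.Theory.
Local Open Scope ring_scope.

Lemma coord_sq_le (R : realType) (d : nat) (v : 'rV[R]_d) (i : 'I_d) :
  (v ord0 i) ^+ 2 <= sqnorm v.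
Proof.
rewrite /sqnorm (bigD1 i) //= lerDl; apply: sumr_ge0 => k _; exact: sqr_ge0.
Qed.

Lemma sq_bound (R : realType) (a b T : R) : 0 < b -> b < T -> a ^+ 2 <= b ^+ 2 ->
  (- T < a) && (a < T).
Proof.
move=> b0 bT h; apply/andP; split; rewrite ltNge; apply/negP => H; nra.
Qed.

Lemma size_le_sum_count (T : eqType) K (P : 'I_K -> pred T) (s : seq T) :
  (forall x, x \in s -> exists j, P j x) ->
  (size s <= \sum_(j < K) count (P j) s)%N.
Proof.
elim: s => [|x s IH] H /=; first by [].
have [j Pj] := H x (mem_head _ _).
rewrite big_split /= (bigD1 j) //= Pj add1n ltnS.
apply: leq_trans (IH _) _; first by move=> y ys; apply: H; rewrite inE ys orbT.
exact: leq_addl.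
Qed.

Lemma lattice_int (R : realType) (d : nat) (x : 'rV[R]_d) i :
  latticeb x -> x ord0 i = (Num.floor (x ord0 i))%:~R.
Proof. by move=> /forallP /(_ i) Hi; rewrite floorK. Qed.

Lemma sphere_bound (R : realType) (d : nat) (Rad : R) : 0 < Rad ->
  exists N : nat, forall s : seq 'rV[R]_d, uniq s -> all (@latticeb R d) s ->
    (forall x, x \in s -> sphere Rad x) -> (size s <= N)%N.
Proof.
move=> Rpos; set M := Num.truncn Rad.
have HM : Rad < M.+1%:R by apply: real_truncnS_gt; exact: gtr0_real.
clearbody M.
pose f (x : 'rV[R]_d) : {ffun 'I_d -> 'I_(2 * M).+1} :=
  [ffun i => inord (absz (Num.floor (x ord0 i) + M%:Z))].
exists #|{ffun 'I_d -> 'I_(2 * M).+1}| => s us ls ss.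
have bnd : forall x, x \in s -> forall i,
    (- (Posz M) <= Num.floor (x ord0 i) :> int) && (Num.floor (x ord0 i) <= Posz M :> int).
  move=> x xs i.
  have lx : latticeb x by move/allP: ls; apply.
  have sx := ss x xs; rewrite /sphere /= in sx.
  have h2 := @coord_sq_le _ _ x i; rewrite sx in h2.
  have e := @lattice_int _ _ x i lx.
  have /andP[lo hi] := sq_bound Rpos HM h2.
  have lo' : ((- (Posz M.+1))%:~R : R) < x ord0 i by rewrite mulrNz.
  rewrite e ltr_int in lo'.
  rewrite e -[M.+1%:R]/((M.+1)%:~R : R) ltr_int in hi.
  clear lo.
  set z := (Num.floor _) in lo' hi *; clearbody z; apply/andP; split; lia.
have fi : {in s &, injective f}.
  move=> x y xs ys /ffunP H; apply/rowP => i.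
  have := H i; rewrite !ffunE => /(congr1 val) /= V.
  have lx : latticeb x by move/allP: ls; apply.
  have ly : latticeb y by move/allP: ls; apply.
  rewrite [LHS](@lattice_int _ _ x i lx) [RHS](@lattice_int _ _ y i ly).
  move: V; have := bnd x xs i; have := bnd y ys i.
  set a := (Num.floor (x ord0 i)); set b := (Num.floor (y ord0 i)).
  clearbody a b => /andP[b1 b2] /andP[a1 a2].
  rewrite !inordK; [|lia|lia] => E.
  have ha : (0 <= a + M%:Z) by lia.
  have hb : (0 <= b + M%:Z) by lia.
  have := congr1 Posz E; rewrite (gez0_abs ha) (gez0_abs hb) => E2.
  by congr (_%:~R); lia.
rewrite -(size_map f) -(card_uniqP _); last by rewrite map_inj_in_uniq.
exact: max_card.
Qed.

Lemma sq_bound2 (R : realType) (a c r : R) : 0 < r -> (a - c) ^+ 2 <= r ^+ 2 ->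
  (c - r <= a) && (a <= c + r).
Proof.
move=> r0 h; apply/andP; split; rewrite leNgt; apply/negP => H; nra.
Qed.

Theorem lemma2p2 (R : realType) (d : nat) (hd : (2 <= d)%N) :
  exists C : R, 0 < C /\
    forall Rad r : R, 0 < Rad -> 0 < r ->
      F_d d Rad r <= C * (1 + r) * kappa_d d Rad.
Proof.
exists 2; split; first by [].
move=> Rad r Rpos rpos.
pose i0 : 'I_d := Ordinal (leq_trans (isT : (0 < 2)%N) hd).
pose e0 : 'rV[R]_d := \row_(k < d) ((k == i0)%:R : R).
have he0 : forall x : 'rV[R]_d, \sum_(k < d) e0 ord0 k * x ord0 k = x ord0 i0.
  move=> x; rewrite (bigD1 i0) //= big1 => [|k kne]; rewrite !mxE.
    by rewrite eqxx mul1r addr0.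
  by rewrite (negbTE kne) mul0r.
have e0n : e0 != 0.
  apply/eqP => /matrixP /(_ ord0 i0); rewrite !mxE eqxx => /eqP.
  by rewrite oner_eq0.
have [N HN] := @sphere_bound R d Rad Rpos.
have ubK : forall (a : 'rV[R]_d) b s, a != 0 -> uniq s -> all (@latticeb R d) s ->
    (forall x, x \in s -> (sphere Rad `&` hyperplane a b)%classic x) ->
    (size s)%:R <= kappa_d d Rad.
  move=> a b s a0 us ls ss; apply: ub_le_sup.
    exists N%:R => y [n /= [a' [b' [a'0 [s' [us' sz ls' ss']]]]] <-].
    by rewrite ler_nat -sz; apply: HN => // x /ss' [].
  by exists (size s) => //; exists a, b; split => //; exists s; split.
have k0 : 0 <= kappa_d d Rad.
  by have := ubK e0 0 [::] e0n isT isT (fun x (h : x \in [::]) => False_ind _ (notF h)).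
have sqc : sqnorm (Rad *: e0) = Rad ^+ 2.
  rewrite /sqnorm (bigD1 i0) //= big1 => [|k kne]; rewrite !mxE.
    by rewrite eqxx mulr1 addr0.
  by rewrite (negbTE kne) mulr0 expr0n.
apply: ge_sup.
  exists 0%:R; exists 0%N => //; exists (Rad *: e0); split; first exact: sqc.
  by exists [::]; split.
move=> y [n /= [c [sc [s [us sz ls ss]]]] <-].
pose K := (Num.truncn (2 * r)).+1.
pose m0 := Num.ceil (c ord0 i0 - r).
pose P : 'I_K -> pred 'rV[R]_d := fun j x => x ord0 i0 == (m0 + (j : nat)%:Z)%:~R.
have cover : forall x, x \in s -> exists j, P j x.
  move=> x xs; have [sx cx] := ss x xs.
  have lx : latticeb x by move/allP: ls; apply.
  have h := @coord_sq_le _ _ (x - c) i0; rewrite !mxE in h.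
  have /andP[hb1 hb2] := sq_bound2 rpos (le_trans h cx).
  have ez := @lattice_int _ _ x i0 lx.
  set z := Num.floor (x ord0 i0) in ez.
  have z1 : (m0 <= z)%R.
    by rewrite /m0 real_ceil_le_int ?num_real // -ez.
  have z2 : ((z - m0)%:~R : R) <= 2 * r.
    rewrite rmorphB /= -ez; have := real_ceil_ge (num_real (c ord0 i0 - r)).
    rewrite -/m0; lra.
  have jK : (`|z - m0|%N < K)%N.
    have r2 : (0 : R) <= 2 * r by rewrite mulr_ge0 // ltW.
    rewrite /K ltnS (truncn_ge_nat _ r2).
    by rewrite natr_absz ger0_norm ?subr_ge0.
  exists (Ordinal jK); rewrite /P /= gez0_abs ?subr_ge0 //.
  by rewrite (addrC m0) subrK -ez.
have H1 := size_le_sum_count cover.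
have H2 : forall j, (count (P j) s)%:R <= kappa_d d Rad.
  move=> j; rewrite -size_filter.
  apply: (ubK e0 ((m0 + (j : nat)%:Z)%:~R)) => //.
  - exact: filter_uniq.
  - by apply/allP => x; rewrite mem_filter => /andP[_ xs]; move/allP: ls; apply.
  - move=> x; rewrite mem_filter => /andP[Px xs]; split; first by case: (ss x xs).
    by rewrite /hyperplane /= he0; apply/eqP.
rewrite -sz; apply: (@le_trans _ _ ((\sum_(j < K) count (P j) s)%:R)).
  by rewrite ler_nat.
rewrite natr_sum; apply: le_trans (ler_sum _ (fun j _ => H2 j)) _.
rewrite sumr_const card_ord -[_ *+ K]mulr_natl; apply: ler_wpM2r => //.
rewrite /K -addn1 natrD.
have t : (Num.truncn (2 * r))%:R <= 2 * r.
  by rewrite truncn_le mulr_ge0 // ltW.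
lra.
Qed.
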